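(* For any $\beta_0\in(0,\pi)$ there exists a finite point set $P$ in the plane such that $\max_{\beta\in(0,\pi)}\operatorname{perim}(\mathcal{O}_\beta\mathcal{H}(P))\neq\operatorname{perim}(\mathcal{O}_{\beta_0}\mathcal{H}(P))$.
   Context: For $\beta\in(0,\pi)$, $\mathcal{O}_\beta$ is the pair of lines through the origin with slopes $0$ and $\tan\beta$. Given an apex $a$, every point is uniquely $a+s(1,0)+t(\cos\beta,\sin\beta)$; an $\mathcal{O}_\beta$-quadrant with apex $a$ is one of the four open sets of such points with $s>0,t>0$; $s<0,t>0$; $s>0,t<0$; or $s<0,t<0$. A quadrant is $P$-free if it contains no point of $P$, and the $\mathcal{O}_\beta$-hull $\mathcal{O}_\beta\mathcal{H}(P)$ is the plane minus the union of all $P$-free $\mathcal{O}_\beta$-quadrants. $\operatorname{perim}$ denotes the total length of the boundary of the set (each boundary segment counted once; in particular a finite set of points has perimeter $0$). *)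

(* Defs.v *)
From HB Require Import structures.
From mathcomp Require Import all_boot all_order all_algebra.
From mathcomp Require Import all_classical all_reals all_analysis.
Set Implicit Arguments. Unset Strict Implicit. Unset Printing Implicit Defensive.
Import Order.TTheory GRing.Theory Num.Theory.
Import numFieldNormedType.Exports.
Local Open Scope classical_set_scope.
Local Open Scope ring_scope.

Definition Oquadrant (R : realType) (beta : R) (a : R * R) (sg1 sg2 : bool)
  : set (R * R) :=
  [set p | exists s t : R,
     (if sg1 then 0 < s else s < 0) /\ (if sg2 then 0 < t else t < 0) /\
     p = (a.1 + s + t * cos beta, a.2 + t * sin beta)].

Definition Pfree (R : realType) (P : seq (R * R)) (Q : set (R * R)) : Prop :=
  forall p, p \in P -> ~ Q p.

Definition Ohull (R : realType) (beta : R) (P : seq (R * R)) : set (R * R) :=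
  ~` [set x | exists (a : R * R) (sg1 sg2 : bool),
         Pfree P (Oquadrant beta a sg1 sg2) /\ Oquadrant beta a sg1 sg2 x].

(* Euclidean distance and diameter (diam of the empty set is 0). *)
Definition edist (R : realType) (x y : R * R) : R :=
  Num.sqrt ((x.1 - y.1) ^+ 2 + (x.2 - y.2) ^+ 2).

Definition ediam (R : realType) (U : set (R * R)) : \bar R :=
  ereal_sup ([set 0%E] `|` [set (edist x y)%:E | x in U & y in U]).

(* One-dimensional Hausdorff measure (normalised so that segments get their length). *)
Definition hausdorff1_delta (R : realType) (delta : R) (A : set (R * R)) : \bar R :=
  ereal_inf [set (\sum_(i <oo) ediam (U i))%E | U in
     [set U : nat -> set (R * R) |
        A `<=` \bigcup_i U i /\ (forall i, (ediam (U i) <= delta%:E)%E)]].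

Definition hausdorff1 (R : realType) (A : set (R * R)) : \bar R :=
  ereal_sup [set hausdorff1_delta delta A | delta in [set d : R | 0 < d]].

Definition boundary (R : realType) (A : set (R * R)) : set (R * R) :=
  closure A `\` interior A.

Definition perim (R : realType) (A : set (R * R)) : \bar R :=
  hausdorff1 (boundary A).

(* Main.v *)
Require Import Defs.
From mathcomp Require Import all_boot all_order all_algebra all_classical all_reals all_analysis.
From mathcomp Require Import ring lra.
Import Order.TTheory GRing.Theory Num.Theory.
Import numFieldNormedType.Exports.
Local Open Scope classical_set_scope.
Local Open Scope ring_scope.
Section S. Variable R : realType.
Implicit Types U : set (R*R).

Lemma ediam_ge0 U : (0 <= ediam U)%E.
Proof. apply: le_ereal_sup_tmp; exists 0%E => //; by left. Qed.

Lemma edist_le_ediam U x y : U x -> U y -> ((Defs.edist x y)%:E <= ediam U)%E.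
Proof. move=> Ux Uy; apply: le_ereal_sup_tmp; exists (Defs.edist x y)%:E => //; right; by exists x => //; exists y. Qed.

Lemma abs2_le_edist (x y : R*R) : `|x.2 - y.2| <= Defs.edist x y.
Proof.
rewrite /Defs.edist -sqrtr_sqr; apply: ler_wsqrtr; rewrite lerDr; exact: sqr_ge0.
Qed.

Lemma H1_lb (B : set (R*R)) (c : R) : 0 < c ->
  (forall y, 0 <= y <= c -> exists x, B x /\ x.2 = y) ->
  ((c/2)%:E <= hausdorff1 B)%E.
Proof.
move=> c0 hB.
apply: (@le_trans _ _ (hausdorff1_delta 1 B)); last first.
  apply: le_ereal_sup_tmp; exists (hausdorff1_delta 1 B) => //. exists 1 => //. rewrite /=. exact: ltr01.
apply/ereal_infP => _ [U [cov dU] <-].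
pose z := fun i => xget ((0:R),(0:R)) (U i).
pose d := fun i => fine (ediam (U i)).
have dE i : (d i)%:E = ediam (U i).
  rewrite /d fineK // ge0_fin_numE ?ediam_ge0 //.
  exact: le_lt_trans (dU i) (ltry 1).
have d0 i : 0 <= d i by rewrite -lee_fin dE ediam_ge0.
pose I := fun i => [set` Interval (BLeft ((z i).2 - d i)) (BRight ((z i).2 + d i))].
have cover : [set` Interval (BLeft (0:R)) (BRight c)] `<=` \bigcup_i I i.
  move=> y /=; rewrite in_itv /= => /hB [x [Bx <-]].
  have [i _ Ui] := cov x Bx.
  exists i => //.
  have Uz : U i (z i) by apply: xgetPex; exists x.
  have h1 := abs2_le_edist x (z i).
  have h2 := @edist_le_ediam (U i) _ _ Ui Uz.
  rewrite -dE lee_fin in h2.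
  rewrite /I /= in_itv /=.
  have := le_trans h1 h2; rewrite ler_norml; move=> /andP[ha hb].
  apply/andP; split; lra.
have := @measure_sigma_subadditive _ _ _ (@lebesgue_measure R) _ I (fun i => measurable_itv _) (measurable_itv _) cover.
move=> hc; have e0 : lebesgue_measure ([set` Interval (BLeft 0) (BRight c)] : set R) = c%:E.
  by rewrite lebesgue_measure_itv /= lte_fin c0 oppr0 adde0.
have {}hc : (c%:E <= \sum_(0 <= n <oo) lebesgue_measure (I n))%E by rewrite -e0; exact: hc.

have hs : (\sum_(0 <= i <oo) lebesgue_measure (I i) <= \sum_(0 <= i <oo) (2%:E * ediam (U i)))%E.
  apply: lee_nneseries => [i _ _|i _]; first exact: measure_ge0.
  rewrite /I lebesgue_measure_itv /= -dE -EFinM.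
  case: ifP => _; last by rewrite lee_fin mulr_ge0.
  rewrite -EFinB lee_fin; lra.
rewrite nneseriesZl in hs; last by move=> i _; exact: ediam_ge0.
have := le_trans hc hs.
have : (0 <= \sum_(0 <= i <oo) ediam (U i))%E by apply: nneseries_ge0 => i _ _; exact: ediam_ge0.
case: (\sum_(0 <= i <oo) ediam (U i))%E => [r||] //= h0.
  rewrite -EFinM !lee_fin; lra.
by rewrite leey.
Qed.


Definition sd (g : bool) (w : R) : Prop := if g then 0 < w else w < 0.
Definition Sc (beta : R) (z : R * R) : R := z.1 - z.2 * cos beta / sin beta.
Definition Tc (beta : R) (z : R * R) : R := z.2 / sin beta.

Lemma quadE beta a g1 g2 z : sin beta != 0 ->
  Oquadrant beta a g1 g2 z <-> sd g1 (Sc beta z - Sc beta a) /\ sd g2 (Tc beta z - Tc beta a).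
Proof.
move=> s0; split.
- move=> [s [t [h1 [h2 ->]]]].
  have -> : Sc beta (a.1 + s + t * cos beta, a.2 + t * sin beta) - Sc beta a = s.
    by rewrite /Sc /=; field.
  have -> : Tc beta (a.1 + s + t * cos beta, a.2 + t * sin beta) - Tc beta a = t.
    by rewrite /Tc /=; field.
  by [].
- move=> [h1 h2]; exists (Sc beta z - Sc beta a), (Tc beta z - Tc beta a).
  split => //; split => //.
  case: z {h1 h2} => z1 z2; case: a => a1 a2; rewrite /Sc /Tc /=.
  by congr pair; field.
Qed.

Lemma notin_hull {beta P x g1 g2 sg ta} : sin beta != 0 ->
  sd g1 (Sc beta x - sg) -> sd g2 (Tc beta x - ta) ->
  (forall p, p \in P -> ~ (sd g1 (Sc beta p - sg) /\ sd g2 (Tc beta p - ta))) ->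
  ~ Ohull beta P x.
Proof.
move=> s0 h1 h2 hP; rewrite /Ohull /= => H; apply: H.
pose a := (sg + ta * cos beta, ta * sin beta).
have Sa : Sc beta a = sg by rewrite /Sc /a /=; field.
have Ta : Tc beta a = ta by rewrite /Tc /a /=; field.
exists a, g1, g2; split.
- move=> p pP; rewrite quadE // Sa Ta; exact: hP.
- by rewrite quadE // Sa Ta.
Qed.

Lemma in_hull beta P x : sin beta != 0 ->
  (forall g1 g2 sg ta, sd g1 (Sc beta x - sg) -> sd g2 (Tc beta x - ta) ->
     exists2 p, p \in P & sd g1 (Sc beta p - sg) /\ sd g2 (Tc beta p - ta)) ->
  Ohull beta P x.
Proof.
move=> s0 H; rewrite /Ohull /= => -[a [g1 [g2 [hf]]]].
rewrite quadE // => -[h1 h2].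
have [p pP hp] := H _ _ _ _ h1 h2.
by apply: (hf p pP); rewrite quadE.
Qed.

Lemma sep1 {v w : R} : w != v -> exists g thr, sd g (v - thr) /\ ~ sd g (w - thr).
Proof.
move=> wv; exists (w < v), ((v + w) / 2); rewrite /sd.
case: (ltrgtP w v) wv => // h _; split; lra.
Qed.

Lemma ST_inj {beta x y} : sin beta != 0 -> Sc beta x = Sc beta y -> Tc beta x = Tc beta y -> x = y.
Proof.
move=> s0; case: x => x1 x2; case: y => y1 y2; rewrite /Sc /Tc /= => h1 h2.
have e2 : x2 = y2.
  by rewrite -[x2](@divfK _ (sin beta)) // h2 divfK.
subst y2; congr pair.
by move: h1 => /addIr.
Qed.

Definition PP (b1 : R) : seq (R * R) := [:: (0, 0); (cos b1, sin b1)].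

Lemma sin_neq0 {beta : R} : 0 < beta < pi -> sin beta != 0.
Proof. by move=> /sin_gt0_pi h; rewrite gt_eqF. Qed.

Lemma Sc0 (beta : R) : Sc beta (0, 0) = 0. Proof. by rewrite /Sc /= !mul0r subr0. Qed.
Lemma Tc0 (beta : R) : Tc beta (0, 0) = 0. Proof. by rewrite /Tc /= mul0r. Qed.

Lemma Scq_neq0 {beta b1 : R} : 0 < beta < pi -> 0 < b1 < pi -> beta != b1 ->
  Sc beta (cos b1, sin b1) != 0.
Proof.
move=> hb hb1 neq; apply/eqP; rewrite /Sc /= => h.
have sb := sin_gt0_pi hb; have sb1 := sin_gt0_pi hb1.
have e : cos b1 * sin beta = sin b1 * cos beta.
  move/eqP: h; rewrite subr_eq0 => /eqP ->.
  by rewrite divfK // gt_eqF.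
have c1 := cos2Dsin2 b1; have c := cos2Dsin2 beta.
set C1 := cos b1 in e c1 *; set S1 := sin b1 in e c1 sb1 *.
set C := cos beta in e c *; set S := sin beta in e c sb *.
have h1 : (C1 * C + S1 * S) ^+ 2 = 1.
  have : (C1 * C + S1 * S) ^+ 2 + (C1 * S - S1 * C) ^+ 2 = (C1 ^+ 2 + S1 ^+ 2) * (C ^+ 2 + S ^+ 2) by ring.
  by rewrite c1 c mulr1 e subrr expr0n /= addr0.
have h2 : C1 * C + S1 * S = 1.
  have : (C1 * C + S1 * S - 1) * (C1 * C + S1 * S + 1) = 0.
    by rewrite -subr_sqr h1 expr1n subrr.
  move/eqP; rewrite mulf_eq0 => /orP[/eqP|/eqP] hh; first lra.
  exfalso.
  have : (C1 + C) ^+ 2 + (S1 + S) ^+ 2 = 0.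
    have -> : (C1 + C) ^+ 2 + (S1 + S) ^+ 2 = (C1 ^+ 2 + S1 ^+ 2) + (C ^+ 2 + S ^+ 2) + 2 * (C1 * C + S1 * S + 1) - 2 by ring.
    by rewrite c1 c hh mulr0 addr0; lra.
  move=> hz; have h4 : 0 < (S1 + S) ^+ 2 by apply: exprn_gt0; apply: addr_gt0.
  have := sqr_ge0 (C1 + C); lra.
have h3 : C1 = C.
  have : (C1 - C) ^+ 2 + (S1 - S) ^+ 2 = 0.
    have -> : (C1 - C) ^+ 2 + (S1 - S) ^+ 2 = (C1 ^+ 2 + S1 ^+ 2) + (C ^+ 2 + S ^+ 2) - 2 * (C1 * C + S1 * S) by ring.
    by rewrite c1 c h2; lra.
  move=> hz; have h5 := sqr_ge0 (S1 - S); have h6 := sqr_ge0 (C1 - C).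
  have : (C1 - C) ^+ 2 = 0 by lra.
  by move/eqP; rewrite sqrf_eq0 subr_eq0 => /eqP.
move/eqP: neq; apply; apply: cos_inj; rewrite ?in_itv /=.
- by case/andP: hb => *; apply/andP; split; apply: ltW.
- by case/andP: hb1 => *; apply/andP; split; apply: ltW.
by rewrite -/C -/C1 h3.
Qed.

Lemma hull_small {beta b1 : R} {x} : 0 < beta < pi -> 0 < b1 < pi -> beta != b1 ->
  Ohull beta (PP b1) x -> x = (0, 0) \/ x = (cos b1, sin b1).
Proof.
move=> hb hb1 neq hx.
have s0 := sin_neq0 hb.
have u1 := Scq_neq0 hb hb1 neq.
set q := (cos b1, sin b1) in u1 *.
have u2 : 0 < Tc beta q by rewrite /Tc /=; apply: divr_gt0; apply: sin_gt0_pi.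
have [xp|xp] := eqVneq x (0, 0); first by left.
have [xq|xq] := eqVneq x q; first by right.
exfalso.
have memP : forall p, p \in PP b1 -> p = (0, 0) \/ p = q.
  by move=> p; rewrite !inE => /orP[/eqP|/eqP]; [left|right].
have caseA : Tc beta q != Tc beta x -> 0 != Sc beta x -> False.
  move=> a1 a2.
  have [g1 [sg [h1 h1']]] := sep1 a2.
  have [g2 [ta [h2 h2']]] := sep1 a1.
  apply: (notin_hull s0 h1 h2 _ hx) => p /memP [->|->] [k1 k2].
  - by rewrite Sc0 in k1.
  - by [].
have caseB : Sc beta q != Sc beta x -> 0 != Tc beta x -> False.
  move=> a1 a2.
  have [g1 [sg [h1 h1']]] := sep1 a1.
  have [g2 [ta [h2 h2']]] := sep1 a2.
  apply: (notin_hull s0 h1 h2 _ hx) => p /memP [->|->] [k1 k2].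
  - by rewrite Tc0 in k2.
  - by [].
have [a|a] := eqVneq (Tc beta q) (Tc beta x); last first.
  have [b|b] := eqVneq 0 (Sc beta x); last exact: caseA a b.
  have [c|c] := eqVneq (Sc beta q) (Sc beta x); first by move: u1; rewrite c -b eqxx.
  have [d|d] := eqVneq 0 (Tc beta x); last exact: caseB c d.
  by move/eqP: xp; apply; apply: ST_inj s0 _ _; rewrite ?Sc0 ?Tc0.
have [c|c] := eqVneq (Sc beta q) (Sc beta x).
  by move/eqP: xq; apply; apply: ST_inj s0 _ _.
have [d|d] := eqVneq 0 (Tc beta x); last exact: caseB c d.
by move: u2; rewrite a -d ltxx.
Qed.

Lemma Scq {b1 : R} : 0 < b1 < pi -> Sc b1 (cos b1, sin b1) = 0.
Proof. move=> h; have := sin_neq0 h; rewrite /Sc /= => s0; by field. Qed.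
Lemma Tcq {b1 : R} : 0 < b1 < pi -> Tc b1 (cos b1, sin b1) = 1.
Proof. move=> h; have := sin_neq0 h; rewrite /Tc /= => s0; exact: divff. Qed.

Lemma hull_line {b1 : R} {x} : 0 < b1 < pi -> Ohull b1 (PP b1) x -> Sc b1 x = 0.
Proof.
move=> hb1 hx; apply/eqP; apply/negPn/negP => a2.
have s0 := sin_neq0 hb1.
rewrite eq_sym in a2.
have [g1 [sg [h1 h1']]] := sep1 a2.
have h2 : sd true (Tc b1 x - (Tc b1 x - 1)) by rewrite /sd; lra.
apply: (notin_hull s0 h1 h2 _ hx) => p; rewrite !inE => /orP[/eqP|/eqP] -> [k1 _].
- by rewrite Sc0 in k1.
- by rewrite Scq in k1.
Qed.

Lemma seg_in_hull (b1 l : R) : 0 < b1 < pi -> 0 <= l <= 1 ->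
  Ohull b1 (PP b1) (l * cos b1, l * sin b1).
Proof.
move=> hb1 hl; have s0 := sin_neq0 hb1.
apply: in_hull => // g1 g2 sg ta.
have -> : Sc b1 (l * cos b1, l * sin b1) = 0 by rewrite /Sc /=; field.
have -> : Tc b1 (l * cos b1, l * sin b1) = l by rewrite /Tc /=; field.
move=> h1 h2.
case: g2 h2 => /= h2.
- exists (cos b1, sin b1); first by rewrite !inE eqxx orbT.
  by rewrite Scq // Tcq //; split => //; rewrite /sd in h2 *; lra.
- exists (0, 0); first by rewrite !inE eqxx.
  by rewrite Sc0 Tc0; split => //; rewrite /sd in h2 *; lra.
Qed.

Lemma ediam_sub1 (U : set (R * R)) p : U `<=` [set p] -> (ediam U <= 0)%E.
Proof.
move=> hU; apply/ereal_supP => _ [-> //|[x ux [y uy <-]]].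
rewrite (hU _ ux) (hU _ uy) /Defs.edist !subrr expr0n /= addr0 sqrtr0.
by [].
Qed.

Lemma perim_small {beta b1 : R} : 0 < beta < pi -> 0 < b1 < pi -> beta != b1 ->
  (perim (Ohull beta (PP b1)) <= 0)%E.
Proof.
move=> hb hb1 neq.
set q := (cos b1, sin b1).
have bd : boundary (Ohull beta (PP b1)) `<=` [set (0, 0)] `|` [set q].
  move=> x [cl _].
  have hcl : closed ([set ((0, 0) : R * R)] `|` [set q]).
    by apply: (@closedU _ [set ((0, 0) : R * R)] [set q]); apply: accessible_closed_set1; apply: hausdorff_accessible; apply: norm_hausdorff.
  have sub : Ohull beta (PP b1) `<=` [set ((0, 0) : R * R)] `|` [set q].
    by move=> y /(hull_small hb hb1 neq) [->|->]; [left|right].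
  move/(closureS sub): cl.
  by rewrite -(proj1 (closure_id _) hcl).
rewrite /perim /hausdorff1; apply/ereal_supP => _ [delta d0 <-].
apply: ge_ereal_inf; exists 0%E => //.
pose U := fun i : nat => if i == 0%N then [set ((0, 0) : R * R)] else if i == 1%N then [set q] else set0.
have hU : forall i, (ediam (U i) <= 0)%E.
  move=> i; rewrite /U; case: ifP => _; first by apply: (@ediam_sub1 _ (0, 0)).
  case: ifP => _; first by apply: (@ediam_sub1 _ q).
  by apply: (@ediam_sub1 _ q) => ? [].
exists U.
  split.
  - by move=> x /bd [->|->]; [exists 0%N | exists 1%N].
  - move=> i; apply: le_trans (hU i) _; rewrite lee_fin; exact: ltW.
apply: eseries0 => i _ _; apply/eqP; rewrite eq_le hU /=; exact: ediam_ge0.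
Qed.

Lemma perim_big {b1 : R} : 0 < b1 < pi ->
  ((sin b1 / 2)%:E <= perim (Ohull b1 (PP b1)))%E.
Proof.
move=> hb1; have sb := sin_gt0_pi hb1.
apply: H1_lb => // y /andP[y0 y1].
pose l := y / sin b1.
have hl : 0 <= l <= 1.
  apply/andP; split; first by apply: divr_ge0 => //; exact: ltW.
  by rewrite ler_pdivrMr // mul1r.
exists (l * cos b1, l * sin b1); split; last by rewrite /= /l divfK // gt_eqF.
split.
  by apply: subset_closure; apply: seg_in_hull.
rewrite /interior /= => /nbhs_ballP [e e0 hball].
set x := (l * cos b1, l * sin b1) in hball *.
have hx : Ohull b1 (PP b1) x by apply: seg_in_hull.
have bx : ball x e (x.1 + e / 2, x.2).
  split => /=.
  - rewrite /ball /= opprD addrA subrr add0r normrN ger0_norm; last (by apply: divr_ge0 => //; exact: ltW); by rewrite ltr_pdivrMr // ltr_pMr // ltr1n.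
  - exact: ballxx.
have h1 := hull_line hb1 (hball _ bx).
have h2 := hull_line hb1 hx.
move: h1 h2; rewrite /Sc /= => a b.
have e0p : 0 < e := e0.
lra.
Qed.

End S.

Theorem lemma7 (R : realType) (beta0 : R) :
  0 < beta0 < pi ->
  exists P : seq (R * R),
    exists beta1 : R,
      [/\ 0 < beta1 < pi,
          (forall beta : R, 0 < beta < pi ->
             (perim (Ohull beta P) <= perim (Ohull beta1 P))%E)
        & perim (Ohull beta1 P) <> perim (Ohull beta0 P)].
Proof.
move=> hb0; have /andP[b0 b0pi] := hb0.
set b1 := beta0 / 2.
have hb1 : 0 < b1 < pi by apply/andP; split; rewrite /b1; lra.
have neq : beta0 != b1 by rewrite /b1; apply/eqP; lra.
have sb := sin_gt0_pi hb1.
have big := @perim_big _ _ hb1.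
have pos : (0 < perim (Ohull b1 (PP _ b1)))%E.
  apply: lt_le_trans big; rewrite lte_fin; lra.
exists (PP _ b1), b1; split => //.
- move=> beta hb; have [->|ne] := eqVneq beta b1; first exact: le_refl.
  exact: le_trans (@perim_small _ _ _ hb hb1 ne) (ltW pos).
- move=> e; have := @perim_small _ _ _ hb0 hb1 neq; rewrite -e => h.
  by have := lt_le_trans pos h; rewrite ltxx.
Qed.
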